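(* For integers $M\ge L>N\ge1$, every configuration of the four-vertex model on the $L\times M$ grid with scalar-product boundary conditions has exactly $(L-N)(M-N)$ vertices of type $a$, $N(M-L+N)$ vertices of type $b$ and $2N(L-N)$ vertices of type $c$. Consequently the weighted partition function $\sum_{\text{conf}}a^{\#a}b^{\#b}c^{\#c}$ equals $a^{(L-N)(M-N)}b^{N(M-L+N)}c^{2N(L-N)}Z_{L,M,N}$, with $Z_{L,M,N}$ the number of configurations.
   Context: Four-vertex model: on the grid of vertices $(n,m)$, $1\le n\le L$, $1\le m\le M$, every edge (including boundary edges sticking out of the rectangle) is thick or thin, such that at every vertex the four incident edges form one of four allowed local configurations: type $a$: all thin; type $b$: both vertical edges thick, both horizontal thin; type $c$ (two kinds): south and east thick, west and north thin; or west and north thick, south and east thin. Scalar-product boundary conditions: the south boundary vertical edges in columns $1,\dots,N$ and the north boundary vertical edges in columns $L-N+1,\dots,L$ are thick; all other boundary edges are thin. $\#a,\#b,\#c$ denote the numbers of vertices of each type in a configuration. *)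

(* Defs.v *)
From mathcomp Require Import all_boot all_order all_algebra.
Set Implicit Arguments. Unset Strict Implicit. Unset Printing Implicit Defensive.
Import GRing.Theory.

(* Four-vertex model on the L x M grid (columns i = 0..L-1 stand for n = i+1,
   rows j = 0..M-1 stand for m = j+1).
   Vertical edges: vert (i, k), k = 0..M, is the vertical edge in column i just
   south of row k (so k = 0 is the south boundary edge, k = M the north one).
   Horizontal edges: horz (k, j), k = 0..L, is the horizontal edge in row j just
   west of column k (k = 0 west boundary, k = L east boundary).
   true = thick, false = thin. *)
Definition config (L M : nat) : finType :=
  ({ffun 'I_L * 'I_M.+1 -> bool} * {ffun 'I_L.+1 * 'I_M -> bool})%type.

Section FourVertex.
Variables (L M N : nat).
Implicit Types (c : config L M) (i : 'I_L) (j : 'I_M).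

Definition eS c i j : bool := c.1 (i, inord j).
Definition eN c i j : bool := c.1 (i, inord j.+1).
Definition eW c i j : bool := c.2 (inord i, j).
Definition eE c i j : bool := c.2 (inord i.+1, j).

Definition is_a c i j : bool := [&& ~~ eS c i j, ~~ eN c i j, ~~ eW c i j & ~~ eE c i j].
Definition is_b c i j : bool := [&& eS c i j, eN c i j, ~~ eW c i j & ~~ eE c i j].
Definition is_c1 c i j : bool := [&& eS c i j, eE c i j, ~~ eW c i j & ~~ eN c i j].
Definition is_c2 c i j : bool := [&& eW c i j, eN c i j, ~~ eS c i j & ~~ eE c i j].
Definition is_c c i j : bool := is_c1 c i j || is_c2 c i j.

(* scalar-product boundary conditions: south edges thick exactly in columns
   1..N, north edges thick exactly in columns L-N+1..L, horizontal boundary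
   edges thin *)
Definition valid c : bool :=
  [&& [forall i, forall j, [|| is_a c i j, is_b c i j, is_c1 c i j | is_c2 c i j]],
      [forall i, c.1 (i, ord0) == (i < N)],
      [forall i, c.1 (i, ord_max) == (L - N <= i)],
      [forall j, ~~ c.2 (ord0, j)] &
      [forall j, ~~ c.2 (ord_max, j)]].

Definition numA c : nat := #|[set p : 'I_L * 'I_M | is_a c p.1 p.2]|.
Definition numB c : nat := #|[set p : 'I_L * 'I_M | is_b c p.1 p.2]|.
Definition numC c : nat := #|[set p : 'I_L * 'I_M | is_c c p.1 p.2]|.

Definition Zcount : nat := #|[set c : config L M | valid c]|.

Definition partfun (R : comNzRingType) (a b cw : R) : R :=
  \sum_(c : config L M | valid c) (a ^+ numA c * b ^+ numB c * cw ^+ numC c).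

End FourVertex.

(* Main.v *)
Require Import Defs.
From mathcomp Require Import all_boot all_order all_algebra ring zify.
Import GRing.Theory.
Local Open Scope ring_scope.

Lemma sbp (f : nat -> int) K : \sum_(k < K) (k%:Z * (f k - f k.+1)) = \sum_(k<K) f k.+1 - K%:Z * f K.
Proof. elim: K => [|K IH]; first by rewrite !big_ord0 mul0r subr0.
rewrite !big_ord_recr /= IH -addn1 PoszD; ring. Qed.

Lemma tele (f : nat -> int) K : \sum_(k < K) (f k.+1 - f k) = f K - f 0%N.
Proof. elim: K => [|K IH]; first by rewrite !big_ord0 subrr.
rewrite !big_ord_recr /= IH; ring. Qed.

Lemma sum_bot (N L : nat) (g : nat -> int) : (N <= L)%N ->
  \sum_(i < L) ((i < N)%N : nat)%:Z * g i = \sum_(t < N) g t.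
Proof.
move=> hNL; rewrite (big_ord_widen L g hNL) [RHS]big_mkcond; apply: eq_bigr => i _.
by case: ifP => _; rewrite ?mul1r ?mul0r.
Qed.

Lemma sum_top (N L : nat) (g : nat -> int) : (N <= L)%N ->
  \sum_(i < L) ((L - N <= i)%N : nat)%:Z * g i = \sum_(t < N) g (t + (L - N))%N.
Proof.
move=> hNL.
rewrite -(big_mkord xpredT (fun i => ((L - N <= i)%N : nat)%:Z * g i)).
rewrite (big_cat_nat _ (n := (L - N)%N)) ?leq_subr //=.
rewrite big1_seq ?add0r; last first.
  move=> i; rewrite mem_index_iota => /andP[_ /andP[_ hi]]; by rewrite leqNgt hi mul0r.
rewrite -{1}(add0n (L - N)%N) big_addn subKn // big_mkord.
apply: eq_bigr => i _; by rewrite leq_addl mul1r.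
Qed.

Lemma sum_const_int (N : nat) (x : int) : \sum_(t < N) x = N%:Z * x.
Proof. by rewrite sumr_const card_ord -mulr_natl natz. Qed.

Section Main.
Variables (L M N : nat) (c : config L M).
Definition vv (i : 'I_L) (k : nat) : int := (c.1 (i, inord k) : nat)%:Z.
Definition hh (k : nat) (j : 'I_M) : int := (c.2 (inord k, j) : nat)%:Z.
Definition zA i j : int := (is_a c i j : nat)%:Z.
Definition zB i j : int := (is_b c i j : nat)%:Z.
Definition zC i j : int := (is_c c i j : nat)%:Z.

Lemma card_sumz (P : 'I_L -> 'I_M -> bool) :
  (#|[set p : 'I_L * 'I_M | P p.1 p.2]| : nat)%:Z = \sum_(i < L) \sum_(j < M) (P i j : nat)%:Z.
Proof.
rewrite -sum1_card (big_morph Posz PoszD (erefl _)) pair_big /= big_mkcond.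
by apply: eq_bigr => p _; rewrite inE; case: (P _ _).
Qed.

Hypothesis hc : valid N c.
Hypothesis hNL : (N <= L)%N.

Lemma loc i j : [/\ zA i j + zB i j + zC i j = 1, zC i j = hh i j + hh i.+1 j,
   2 * zB i j + zC i j = vv i j + vv i j.+1 & vv i j + hh i j = vv i j.+1 + hh i.+1 j].
Proof.
move/and5P: hc => [/forallP hv _ _ _ _]; move/forallP: (hv i) => /(_ j).
rewrite /zA /zB /zC /vv /hh /is_c /is_a /is_b /is_c1 /is_c2 /eS /eN /eW /eE.
by case: (c.1 _) (c.1 _) (c.2 _) (c.2 _) => [] [] [] [].
Qed.

Lemma bnd : [/\ forall i, vv i 0 = ((i < N)%N : nat)%:Z,
   forall i, vv i M = ((L - N <= i)%N : nat)%:Z,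
   forall j, hh 0 j = 0 & forall j, hh L j = 0].
Proof.
have e0M : inord 0 = ord0 :> 'I_M.+1 by apply: val_inj; rewrite /= inordK.
have eMM : inord M = ord_max :> 'I_M.+1 by apply: val_inj; rewrite /= inordK.
have e0L : inord 0 = ord0 :> 'I_L.+1 by apply: val_inj; rewrite /= inordK.
have eLL : inord L = ord_max :> 'I_L.+1 by apply: val_inj; rewrite /= inordK.
move/and5P: hc => [_ /forallP hb /forallP ht /forallP hw /forallP he].
split=> [i|i|j|j]; rewrite /vv /hh ?e0M ?eMM ?e0L ?eLL.
- by rewrite (eqP (hb i)).
- by rewrite (eqP (ht i)).
- by rewrite (negbTE (hw j)).
- by rewrite (negbTE (he j)).
Qed.

Lemma stepW j : \sum_(i < L) hh i.+1 j = \sum_(i < L) hh i j.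
Proof.
have [_ _ h0 hL] := bnd.
apply/eqP; rewrite -subr_eq0 -sumrB (tele (fun k => hh k j)) h0 hL subrr //.
Qed.

Lemma stepE : \sum_(i < L) \sum_(j < M) hh i.+1 j = (N * (L - N))%N%:Z.
Proof.
have [b0 bM h0 hL] := bnd.
rewrite exchange_big /=.
transitivity (\sum_(j < M) \sum_(i < L) (i%:Z * (vv i j.+1 - vv i j))).
  apply: eq_bigr => j _.
  have := sbp (fun k => hh k j) L; rewrite /= hL mulr0 subr0 => <-.
  apply: eq_bigr => i _; have [_ _ _ h4] := loc i j.
  congr (_ * _); apply/eqP; rewrite subr_eq addrAC -h4; apply/eqP; ring.
rewrite exchange_big /=.
transitivity (\sum_(i < L) (((L - N <= i)%N : nat)%:Z * i%:Z - ((i < N)%N : nat)%:Z * i%:Z)).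
  apply: eq_bigr => i _; rewrite -mulr_sumr (tele (vv i)) b0 bM; ring.
rewrite sumrB (@sum_top N L (fun i => i%:Z)) // (@sum_bot N L (fun i => i%:Z)) // -sumrB.
rewrite (eq_bigr (fun _ => (L - N)%N%:Z)); last by move=> t _; rewrite PoszD addrC addKr.
by rewrite sum_const_int PoszM.
Qed.

Lemma cnt_top : \sum_(i < L) ((L - N <= i)%N : nat)%:Z = N%:Z.
Proof.
rewrite (eq_bigr (fun i : 'I_L => ((L - N <= i)%N : nat)%:Z * (fun _ => 1) i)); last by move=> *; rewrite mulr1.
by rewrite (@sum_top N L (fun _ => 1)) // sum_const_int mulr1.
Qed.
Lemma cnt_bot : \sum_(i < L) ((i < N)%N : nat)%:Z = N%:Z.
Proof.
rewrite (eq_bigr (fun i : 'I_L => ((i < N)%N : nat)%:Z * (fun _ => 1) i)); last by move=> *; rewrite mulr1.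
by rewrite (@sum_bot N L (fun _ => 1)) // sum_const_int mulr1.
Qed.

Lemma stepN : \sum_(i < L) \sum_(j < M) vv i j.+1 = (M * N)%N%:Z.
Proof.
have [b0 bM h0 hL] := bnd.
transitivity (\sum_(i < L) (\sum_(j < M) (j%:Z * (vv i j - vv i j.+1)) + M%:Z * vv i M)).
  by apply: eq_bigr => i _; rewrite sbp subrK.
rewrite big_split /=.
transitivity (\sum_(j < M) \sum_(i < L) (j%:Z * (hh i.+1 j - hh i j)) + M%:Z * N%:Z).
  congr (_ + _).
    rewrite exchange_big /=; apply: eq_bigr => j _; apply: eq_bigr => i _.
    have [_ _ _ h4] := loc i j; congr (_ * _); rewrite (_ : vv i j = vv i j.+1 + hh i.+1 j - hh i j); [ring | by rewrite -h4 addrK].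
  by rewrite -mulr_sumr -cnt_top; congr (_ * _); apply: eq_bigr => i _; rewrite bM.
rewrite big1 ?add0r ?PoszM //.
by move=> j _; rewrite -mulr_sumr sumrB stepW subrr mulr0.
Qed.

Lemma stepS : \sum_(i < L) \sum_(j < M) vv i j = (M * N)%N%:Z.
Proof.
have [b0 bM h0 hL] := bnd.
rewrite -stepN; apply/eqP; rewrite eq_sym -subr_eq0 -sumrB.
rewrite (eq_bigr (fun i : 'I_L => ((L - N <= i)%N : nat)%:Z - ((i < N)%N : nat)%:Z)).
  by rewrite sumrB cnt_top cnt_bot subrr.
by move=> i _; rewrite -sumrB (tele (vv i)) b0 bM.
Qed.
End Main.
Theorem mainTheorem4 (L M N : nat) :
  (1 <= N)%N -> (N < L)%N -> (L <= M)%N ->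
  (forall c : config L M, @valid L M N c ->
     [/\ numA c = ((L - N) * (M - N))%N,
         numB c = (N * (M - L + N))%N &
         numC c = (2 * N * (L - N))%N]) /\
  (forall (R : comNzRingType) (a b cw : R),
     @partfun L M N R a b cw =
     a ^+ ((L - N) * (M - N)) * b ^+ (N * (M - L + N)) * cw ^+ (2 * N * (L - N))
       * (Zcount L M N)%:R).
Proof.
move=> h1 h2 h3; have hNL : (N <= L)%N by apply: ltnW.
have part1 : forall c : config L M, @valid L M N c ->
     [/\ numA c = ((L - N) * (M - N))%N,
         numB c = (N * (M - L + N))%N &
         numC c = (2 * N * (L - N))%N].
  move=> c hc.
  have TA : (numA c)%:Z = \sum_(i<L) \sum_(j<M) zA L M c i j := card_sumz L M (fun i j => is_a c i j).
  have TB : (numB c)%:Z = \sum_(i<L) \sum_(j<M) zB L M c i j := card_sumz L M (fun i j => is_b c i j).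
  have TC : (numC c)%:Z = \sum_(i<L) \sum_(j<M) zC L M c i j := card_sumz L M (fun i j => is_c c i j).
  have T1 : (numA c)%:Z + (numB c)%:Z + (numC c)%:Z = (L * M)%N%:Z.
    rewrite TA TB TC -!big_split /=.
    transitivity (\sum_(i<L) \sum_(j<M) (1:int)).
      apply: eq_bigr => i _; rewrite -!big_split /=; apply: eq_bigr => j _.
      by case: (@loc _ _ _ _ hc i j).
    by rewrite (eq_bigr (fun _ => M%:Z * 1)) => [|i _]; rewrite sum_const_int ?mulr1 ?PoszM.
  have T3 : (numC c)%:Z = (2 * (N * (L - N)))%N%:Z.
    rewrite TC; transitivity (\sum_(i<L) \sum_(j<M) hh L M c i j + \sum_(i<L) \sum_(j<M) hh L M c i.+1 j).
      rewrite -big_split; apply: eq_bigr => i _; rewrite -big_split; apply: eq_bigr => j _.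
      by case: (@loc _ _ _ _ hc i j).
    rewrite exchange_big /= (eq_bigr _ (fun j _ => esym (@stepW _ _ _ _ hc j))) exchange_big /=.
    by rewrite (@stepE _ _ _ _ hc hNL) -PoszD mul2n addnn.
  have T2 : 2 * (numB c)%:Z + (numC c)%:Z = (2 * (M * N))%N%:Z.
    rewrite TB TC mulr_sumr -big_split.
    transitivity (\sum_(i<L) \sum_(j<M) vv L M c i j + \sum_(i<L) \sum_(j<M) vv L M c i j.+1).
      rewrite -big_split; apply: eq_bigr => i _; rewrite mulr_sumr -!big_split; apply: eq_bigr => j _.
      by case: (@loc _ _ _ _ hc i j).
    by rewrite (@stepS _ _ _ _ hc hNL) (@stepN _ _ _ _ hc hNL) -PoszD mul2n addnn.
  have [x eL] : exists x, L = (N + x)%N by exists (L - N)%N; lia.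
  have [y eM] : exists y, M = (L + y)%N by exists (M - L)%N; lia.
  subst M L.
  have e1 : (N + x - N = x)%N by lia.
  have e2 : (N + x + y - N = x + y)%N by lia.
  have e3 : (N + x + y - (N + x) + N = y + N)%N by lia.
  rewrite e1 e2 e3 in T1 T2 T3 *.
  split; nia.
split=> // R a b cw.
rewrite /partfun (eq_bigr (fun _ => a ^+ ((L - N) * (M - N)) * b ^+ (N * (M - L + N)) * cw ^+ (2 * N * (L - N)))); last first.
  by move=> c hc; case: (part1 c hc) => -> -> ->.
by rewrite sumr_const /Zcount cardsE mulr_natr.
Qed.
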